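(* For every positive integer $r$, with $m=2^r$, the matrix $S_r$ is the incidence matrix of a $2$-$(m,m/2,m/2-1)$ block design; that is, the collection of blocks $\mathcal{J}_b=\{a:(S_r)_{a,b}=1\}$, $b=1,\dots,2^{r+1}-2$, is a $2$-$(m,m/2,m/2-1)$ block design on $\{1,\dots,m\}$.
   Context: Define $\{0,1\}$-matrices $S_r$ recursively. Let $S_1=I_2$. For $r\ge1$ let $F_r=I_{2^r-1}\otimes\begin{pmatrix}0&1\\1&0\end{pmatrix}$, and let $1_r$, $0_r$ denote the $2^r\times1$ all-ones and all-zeros column vectors. For $r\ge2$ set $S_r=\big(B_r^{(i)}\ B_r^{(ii)}\ B_r^{(iii)}\big)$ (horizontal concatenation) with $$B_r^{(i)}=\begin{pmatrix}1_{r-1}&0_{r-1}\\0_{r-1}&1_{r-1}\end{pmatrix},\quad B_r^{(ii)}=\begin{pmatrix}S_{r-1}\\S_{r-1}\end{pmatrix},\quad B_r^{(iii)}=\begin{pmatrix}S_{r-1}\\S_{r-1}F_{r-1}\end{pmatrix}.$$ $S_r$ is a $2^r\times(2^{r+1}-2)$ matrix. A $2$-$(m,l,\lambda)$ block design is a collection of $l$-element subsets (blocks) of $\{1,\dots,m\}$ such that every $2$-element subset of $\{1,\dots,m\}$ is contained in exactly $\lambda$ blocks; the incidence matrix of a sequence of subsets $\mathcal{J}_1,\dots,\mathcal{J}_n$ is the $m\times n$ matrix with $(a,b)$-entry $1$ if $a\in\mathcal{J}_b$ and $0$ otherwise. *)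

(* Defs.v *)
From mathcomp Require Import all_boot all_order all_algebra.
From mathcomp Require Import zify.
Set Implicit Arguments. Unset Strict Implicit. Unset Printing Implicit Defensive.
Import GRing.Theory.
Local Open Scope ring_scope.

Lemma S_rows_eq (k : nat) : (2 ^ k.+1 + 2 ^ k.+1 = 2 ^ k.+2)%N.
Proof. by rewrite addnn -mul2n -expnS. Qed.

Lemma S_cols_eq (k : nat) :
  (2 + (2 ^ k.+2 - 2) + (2 ^ k.+2 - 2) = 2 ^ k.+3 - 2)%N.
Proof.
have h : (4 <= 2 ^ k.+2)%N.
  by rewrite !expnS mulnA leq_pmulr // expn_gt0.
rewrite (expnS 2 k.+2); lia.
Qed.

(* F_r = I_{2^r - 1} (x) [[0,1],[1,0]], of size 2(2^r - 1) = 2^{r+1} - 2.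
   Here Fm k = F_{k+1}.  Kronecker product written out entrywise:
   with i = 2 i1 + i2, j = 2 j1 + j2 (i2, j2 in {0,1}), the entry is
   delta_{i1 j1} * P_{i2 j2} = [i/2 = j/2 and i <> j]. *)
Definition Fm (k : nat) : 'M[int]_(2 ^ k.+2 - 2) :=
  \matrix_(i, j) ((i./2 == j./2)%N && (i != j))%:R.

(* Sm k = S_{k+1}, a 2^{k+1} x (2^{k+2} - 2) matrix. *)
Fixpoint Sm (k : nat) : 'M[int]_(2 ^ k.+1, 2 ^ k.+2 - 2) :=
  match k return 'M[int]_(2 ^ k.+1, 2 ^ k.+2 - 2) with
  | 0 => castmx (erefl 2 : 2 = 2 ^ 1, erefl 2 : 2 = 2 ^ 2 - 2)%N (1%:M : 'M[int]_2)
  | k'.+1 =>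
      let Bi : 'M[int]_(2 ^ k'.+1 + 2 ^ k'.+1, 2) :=
        col_mx (row_mx (const_mx 1 : 'M[int]_(2 ^ k'.+1, 1)) (const_mx 0 : 'M[int]_(2 ^ k'.+1, 1)))
               (row_mx (const_mx 0 : 'M[int]_(2 ^ k'.+1, 1)) (const_mx 1 : 'M[int]_(2 ^ k'.+1, 1))) in
      let Bii := col_mx (Sm k') (Sm k') in
      let Biii := col_mx (Sm k') (Sm k' *m Fm k') in
      castmx (S_rows_eq k', S_cols_eq k') (row_mx (row_mx Bi Bii) Biii)
  end.

(* Smat r = S_r for r >= 1 (S 0 is a dummy value, never used). *)
Definition Smat (r : nat) : 'M[int]_(2 ^ r, 2 ^ r.+1 - 2) :=
  match r return 'M[int]_(2 ^ r, 2 ^ r.+1 - 2) with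
  | 0 => 0
  | k.+1 => Sm k
  end.

Definition incidence_matrix (m n : nat) (J : 'I_n -> {set 'I_m}) : 'M[int]_(m, n) :=
  \matrix_(a, b) (a \in J b)%:R.

(* A 2-(m,l,lambda) block design: a sequence of blocks (indexed by 'I_n,
   repetitions allowed), each an l-subset of {1..m}, with every 2-subset
   contained in exactly lambda blocks. *)
Definition is_2design (m l lambda n : nat) (J : 'I_n -> {set 'I_m}) : Prop :=
  (forall b, #|J b| = l) /\
  (forall x y : 'I_m, x != y -> #|[set b | (x \in J b) && (y \in J b)]| = lambda).

(* Main.v *)
Require Import Defs.
From mathcomp Require Import all_boot all_order all_algebra zify.
Set Implicit Arguments. Unset Strict Implicit. Unset Printing Implicit Defensive.
Import GRing.Theory.

Definition swap (b : nat) := if odd b then b.-1 else b.+1.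

Lemma swap_spec j : exists q, (j = q.*2 /\ swap j = q.*2.+1) \/ (j = q.*2.+1 /\ swap j = q.*2).
Proof.
exists j./2; rewrite /swap; have := odd_double_half j.
case: (odd j) => /= h; [right|left]; lia.
Qed.

Lemma swapK j : swap (swap j) = j.
Proof. by have [q [[-> ->]|[-> ->]]] := swap_spec j; rewrite /swap /= ?odd_double. Qed.

Lemma swap_lt j m : j < m.*2 -> swap j < m.*2.
Proof. have [q [[-> ->]|[-> ->]]] := swap_spec j; lia. Qed.

Lemma swapD j m : swap (j + m.*2) = swap j + m.*2.
Proof. have [q [[-> ->]|[-> ->]]] := swap_spec j; rewrite ?addSn -doubleD /swap /= ?odd_double /=; lia. Qed.

Lemma Fm_swap l j : ((l./2 == j./2) && (l != j)) = (l == swap j).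
Proof.
have [q [[-> ->]|[-> ->]]] := swap_spec j;
have [p [[-> _]|[-> _]]] := swap_spec l;
rewrite ?doubleK ?uphalf_double /= ?doubleK; apply/idP/idP; lia.
Qed.

Lemma n_even k : 2 ^ k.+2 - 2 = (2 ^ k.+1 - 1).*2.
Proof. rewrite -mul2n mulnBr (expnS 2 k.+1); lia. Qed.

Fixpoint s (k a b : nat) : bool :=
 match k with
 | 0 => a == b
 | k'.+1 =>
   if b < 2 then (a < 2 ^ k'.+1) == (b == 0)
   else if b < 2 + (2 ^ k'.+2 - 2) then s k' (if a < 2 ^ k'.+1 then a else a - 2 ^ k'.+1) (b - 2)
   else if a < 2 ^ k'.+1 then s k' a (b - 2 - (2 ^ k'.+2 - 2))
   else s k' (a - 2 ^ k'.+1) (swap (b - 2 - (2 ^ k'.+2 - 2)))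
 end.

Lemma swap_ord k (j : 'I_(2^k.+2-2)) : swap j < 2^k.+2-2.
Proof. have := ltn_ord j; move: (nat_of_ord j) => x; rewrite n_even; exact: swap_lt. Qed.

Lemma mulF k (M : 'M[int]_(2^k.+1, 2^k.+2-2)) i (j : 'I_(2^k.+2-2)) :
  ((M *m Fm k) i j)%R = M i (Ordinal (swap_ord j)).
Proof.
rewrite mxE (bigD1 (Ordinal (swap_ord j))) //= big1 ?addr0.
  by rewrite mxE Fm_swap eqxx mulr1.
move=> l /eqP hl; rewrite mxE Fm_swap.
case: eqP => [e|]; last by rewrite mulr0.
by case: hl; apply: val_inj.
Qed.

Lemma Bi_entry h (i : 'I_h) (j : 'I_(1+1)) (c d : int) :
  row_mx (const_mx c : 'M_(h,1)) (const_mx d) i j = if nat_of_ord j == 0 then c else d.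
Proof.
by case: (split_ordP j) => x ->; rewrite ?row_mxEl ?row_mxEr !mxE ord1.
Qed.

Lemma Sm_s k (a : 'I_(2^k.+1)) (b : 'I_(2^k.+2-2)) : Sm k a b = ((s k a b)%:R)%R.
Proof.
elim: k a b => [|k IH] a b; first by rewrite /= castmxE !mxE.
rewrite /= castmxE /=.
set a' := cast_ord _ a; set b' := cast_ord _ b.
have ea : nat_of_ord a' = a by []. have eb : nat_of_ord b' = b by [].
move: a' b' ea eb => a' b' ea eb.
have hn := ltn_ord b. have hm := ltn_ord a.
have e4 : 2 ^ k.+3 = 2 * 2 ^ k.+2 by rewrite expnS.
have e3 : 2 ^ k.+2 = 2 * 2 ^ k.+1 by rewrite expnS.
have e2 : 0 < 2 ^ k.+1 by rewrite expn_gt0.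
case: (split_ordP a') ea => i -> ea; rewrite /= in ea; have hi := ltn_ord i.
- have -> : (a < 2 ^ k.+1) = true by lia.
  case: (split_ordP b') eb => j -> eb; have hj := ltn_ord j; rewrite ?row_mxEl ?row_mxEr ?col_mxEu.
  + case: (split_ordP j) eb => j1 -> eb; rewrite ?row_mxEl ?row_mxEr ?col_mxEu; rewrite /= in eb.
    * rewrite Bi_entry -eb; rewrite (ltn_ord j1).
      by case: (nat_of_ord j1 == 0).
    * rewrite IH; have -> : (b < 2) = false by lia.
      have -> : (b < 2 + (2 ^ k.+2 - 2)) = true by have := ltn_ord j1; lia.
      by rewrite -ea; congr (_%:R)%R; congr (s _ _ _); lia.
  + rewrite IH; rewrite /= in eb; have -> : (b < 2) = false by lia.
    have -> : (b < 2 + (2 ^ k.+2 - 2)) = false by lia.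
    by rewrite -ea; congr (_%:R)%R; congr (s _ _ _); lia.
- have -> : (a < 2 ^ k.+1) = false by lia.
  case: (split_ordP b') eb => j -> eb; have hj := ltn_ord j; rewrite ?row_mxEl ?row_mxEr ?col_mxEd.
  + case: (split_ordP j) eb => j1 -> eb; rewrite ?row_mxEl ?row_mxEr ?col_mxEd; rewrite /= in eb.
    * rewrite Bi_entry -eb; rewrite (ltn_ord j1).
      by case: (nat_of_ord j1 == 0).
    * rewrite IH; have -> : (b < 2) = false by lia.
      have -> : (b < 2 + (2 ^ k.+2 - 2)) = true by have := ltn_ord j1; lia.
      by congr (_%:R)%R; congr (s _ _ _); lia.
  + rewrite mulF IH; rewrite /= in eb; have -> : (b < 2) = false by lia.
    have -> : (b < 2 + (2 ^ k.+2 - 2)) = false by lia.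
    by congr (_%:R)%R; congr (s _ _ (swap _)); lia.
Qed.

Lemma sumS0 n (f : nat -> bool) : \sum_(0 <= c < n) ~~ f c + \sum_(0 <= c < n) f c = n.
Proof.
rewrite -big_split /= (eq_bigr (fun _ => 1)) ?sum_nat_const_nat ?muln1 ?subn0 //.
by move=> i _; case: (f i).
Qed.

Lemma sumS1 n (f g : nat -> bool) :
  \sum_(0 <= c < n) (~~ f c && ~~ g c) + \sum_(0 <= c < n) f c + \sum_(0 <= c < n) g c
  = n + \sum_(0 <= c < n) (f c && g c).
Proof.
have H : \sum_(0 <= c < n) ((~~ f c && ~~ g c) + f c + g c) = \sum_(0 <= c < n) (1 + (f c && g c)).
  by apply: eq_bigr => i _; case: (f i); case: (g i).
by rewrite !big_split /= sum_nat_const_nat muln1 subn0 in H.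
Qed.

Lemma sumS2 n (f g : nat -> bool) :
  \sum_(0 <= c < n) (f c && ~~ g c) + \sum_(0 <= c < n) (f c && g c) = \sum_(0 <= c < n) f c.
Proof.
rewrite -!big_split /=.
by apply: eq_bigr => i _; case: (f i); case: (g i).
Qed.

Lemma sum_shift a b (F : nat -> nat) :
  \sum_(a <= i < b) F i = \sum_(0 <= i < b - a) F (i + a).
Proof. by have := big_addn 0 b a xpredT F; rewrite add0n. Qed.

Lemma split_cols k (F : nat -> nat) :
  \sum_(0 <= b < 2 ^ k.+3 - 2) F b = F 0 + F 1 + \sum_(0 <= c < 2 ^ k.+2 - 2) F (c + 2)
     + \sum_(0 <= c < 2 ^ k.+2 - 2) F (c + 2 + (2 ^ k.+2 - 2)).
Proof.
have e4 : 2 ^ k.+3 = 2 * 2 ^ k.+2 by rewrite expnS.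
have e2 : 0 < 2 ^ k.+1 by rewrite expn_gt0.
have e3 : 2 ^ k.+2 = 2 * 2 ^ k.+1 by rewrite expnS.
have h1 : 2 + (2^k.+2-2) <= 2^k.+3 - 2 by lia.
rewrite (big_cat_nat (leq0n _) h1).
have h2 : 2 <= 2 + (2^k.+2-2) by lia.
rewrite (big_cat_nat (leq0n 2) h2).
rewrite big_nat_recr //= big_nat_recr //= big_geq // add0n.
rewrite (sum_shift 2) (sum_shift (2 + (2 ^ k.+2 - 2))).
have -> : 2 + (2 ^ k.+2 - 2) - 2 = 2 ^ k.+2 - 2 by lia.
have -> : 2 ^ k.+3 - 2 - (2 + (2 ^ k.+2 - 2)) = 2 ^ k.+2 - 2 by lia.
congr (_ + _); apply: eq_bigr => i _; by rewrite addnA.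
Qed.

Lemma split_rows k (G : nat -> nat) :
  \sum_(0 <= a < 2 ^ k.+2) G a = \sum_(0 <= a < 2 ^ k.+1) G a + \sum_(0 <= a < 2 ^ k.+1) G (a + 2 ^ k.+1).
Proof.
have e3 : 2 ^ k.+2 = 2 * 2 ^ k.+1 by rewrite expnS.
have h1 : 2 ^ k.+1 <= 2^k.+2 by lia.
rewrite (big_cat_nat (leq0n _) h1).
rewrite (sum_shift (2 ^ k.+1)); congr (_ + _).
have -> : 2 ^ k.+2 - 2 ^ k.+1 = 2 ^ k.+1 by lia.
by [].
Qed.

Lemma s_B0 k a : s k.+1 a 0 = (a < 2 ^ k.+1).
Proof. by rewrite /=; case: (a < _). Qed.

Lemma s_B0' k a : s k.+1 a 1 = ~~ (a < 2 ^ k.+1).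
Proof. by rewrite /=; case: (a < _). Qed.

Lemma s_B1 k a c : c < 2 ^ k.+2 - 2 ->
  s k.+1 a (c + 2) = s k (if a < 2 ^ k.+1 then a else a - 2 ^ k.+1) c.
Proof.
move=> hc /=.
have -> : (c + 2 < 2) = false by lia.
have -> : (c + 2 < 2 + (2 ^ k.+2 - 2)) = true by lia.
by rewrite addnK.
Qed.

Lemma s_B2 k a c : c < 2 ^ k.+2 - 2 ->
  s k.+1 a (c + 2 + (2 ^ k.+2 - 2)) =
  if a < 2 ^ k.+1 then s k a c else s k (a - 2 ^ k.+1) (swap c).
Proof.
move=> hc /=.
have -> : (c + 2 + (2 ^ k.+2 - 2) < 2) = false by lia.
have -> : (c + 2 + (2 ^ k.+2 - 2) < 2 + (2 ^ k.+2 - 2)) = false by lia.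
have -> : c + 2 + (2 ^ k.+2 - 2) - 2 - (2 ^ k.+2 - 2) = c by lia.
by case: (a < _).
Qed.

Lemma col_cases k b : b < 2 ^ k.+3 - 2 ->
  [\/ b = 0, b = 1, exists2 c, c < 2 ^ k.+2 - 2 & b = c + 2 |
      exists2 c, c < 2 ^ k.+2 - 2 & b = c + 2 + (2 ^ k.+2 - 2)].
Proof.
have e4 : 2 ^ k.+3 = 2 * 2 ^ k.+2 by rewrite expnS.
have e2 : 0 < 2 ^ k.+1 by rewrite expn_gt0.
have e3 : 2 ^ k.+2 = 2 * 2 ^ k.+1 by rewrite expnS.
move=> hb.
case: (ltnP b 2) => h2.
  by case: b hb h2 => [|[|]] //; [constructor 1|constructor 2].
case: (ltnP b (2 + (2 ^ k.+2 - 2))) => h3.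
  by constructor 3; exists (b - 2); lia.
by constructor 4; exists (b - 2 - (2 ^ k.+2 - 2)); lia.
Qed.

Lemma swap2 c : swap (c + 2) = swap c + 2.
Proof. exact: (swapD c 1). Qed.

Lemma swap2N k c : swap (c + 2 + (2 ^ k.+2 - 2)) = swap c + 2 + (2 ^ k.+2 - 2).
Proof.
have e : 2 + (2 ^ k.+2 - 2) = (2 ^ k.+1 - 1).+1.*2 by rewrite n_even doubleS.
by rewrite -!addnA e swapD.
Qed.

Lemma swap_ltN k c : c < 2 ^ k.+2 - 2 -> swap c < 2 ^ k.+2 - 2.
Proof. by move=> hc; have := swap_ord (Ordinal hc). Qed.

Lemma comp k a b : a < 2 ^ k.+1 -> b < 2 ^ k.+2 - 2 -> s k a (swap b) = ~~ s k a b.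
Proof.
elim: k a b => [|k IH] a b ha hb.
  by case: a ha => [|[|]] //; case: b hb => [|[|]].
have e2 : 0 < 2 ^ k.+1 by rewrite expn_gt0.
have e3 : 2 ^ k.+2 = 2 * 2 ^ k.+1 by rewrite expnS.
have hh : (if a < 2 ^ k.+1 then a else a - 2 ^ k.+1) < 2 ^ k.+1.
  by case: ifP => hx'; lia.
case/col_cases: hb => [->|->|[c hc ->]|[c hc ->]].
- have -> : swap 0 = 1 by [].
  by rewrite s_B0 s_B0'.
- have -> : swap 1 = 0 by [].
  by rewrite s_B0 s_B0' negbK.
- by rewrite swap2 !s_B1 ?swap_ltN // IH.
- rewrite swap2N !s_B2 ?swap_ltN //; case: ifP => hx; first by rewrite IH.
  by rewrite swapK IH ?negbK ?swap_ltN //; lia.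
Qed.
Lemma cw k b : b < 2 ^ k.+2 - 2 -> \sum_(0 <= a < 2 ^ k.+1) s k a b = 2 ^ k.
Proof.
elim: k b => [|k IH] b hb.
  by case: b hb => [|[|]] // _; rewrite big_nat_recr //= big_nat_recr //= big_geq.
have e2 : 0 < 2 ^ k.+1 by rewrite expn_gt0.
have e3 : 2 ^ k.+2 = 2 * 2 ^ k.+1 by rewrite expnS.
have e1 : 2 ^ k.+1 = 2 * 2 ^ k by rewrite expnS.
rewrite split_rows.
have top : forall F G, (forall a, a < 2 ^ k.+1 -> F a = G a) ->
   \sum_(0 <= a < 2 ^ k.+1) F a = \sum_(0 <= a < 2 ^ k.+1) G a.
  by move=> F G H; apply: eq_big_nat => a /andP[_ ha]; apply: H.
case/col_cases: hb => [->|->|[c hc ->]|[c hc ->]].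
- rewrite (top _ (fun _ => 1)); last by move=> a ha; cbv beta; rewrite s_B0 ha.
  rewrite (top (fun a => s k.+1 (a + 2 ^ k.+1) 0) (fun _ => 0)); last by move=> a ha; cbv beta; rewrite s_B0; case: ltnP => //; lia.
  by rewrite !sum_nat_const_nat subn0 muln1 muln0 addn0.
- rewrite (top _ (fun _ => 0)); last by move=> a ha; cbv beta; rewrite s_B0' ha.
  rewrite (top (fun a => s k.+1 (a + 2 ^ k.+1) 1) (fun _ => 1)); last first.
    by move=> a ha; cbv beta; rewrite s_B0'; case: ltnP => //; lia.
  by rewrite !sum_nat_const_nat subn0 muln1 muln0.
- rewrite (top _ (fun a => s k a c)); last by move=> a ha; cbv beta; rewrite s_B1 // ha.
  rewrite (top (fun a => s k.+1 (a + 2 ^ k.+1) (c + 2)) (fun a => s k a c)); last first.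
    move=> a ha; cbv beta; rewrite s_B1 //; case: ltnP => h; first lia.
    by rewrite addnK.
  by rewrite IH // e1 mul2n addnn.
- rewrite (top _ (fun a => s k a c)); last by move=> a ha; cbv beta; rewrite s_B2 // ha.
  rewrite (top (fun a => s k.+1 (a + 2 ^ k.+1) (c + 2 + (2 ^ k.+2 - 2))) (fun a => s k a (swap c))); last first.
    move=> a ha; cbv beta; rewrite s_B2 //; case: ltnP => h; first lia.
    by rewrite addnK.
  by rewrite !IH ?swap_ltN // e1 mul2n addnn.
Qed.

Lemma eqN k (F G : nat -> nat) : (forall c, c < 2 ^ k.+2 - 2 -> F c = G c) ->
   \sum_(0 <= c < 2 ^ k.+2 - 2) F c = \sum_(0 <= c < 2 ^ k.+2 - 2) G c.
Proof. by move=> H; apply: eq_big_nat => a /andP[_ ha]; apply: H. Qed.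

Lemma rw k a : a < 2 ^ k.+1 -> \sum_(0 <= b < 2 ^ k.+2 - 2) s k a b = 2 ^ k.+1 - 1.
Proof.
elim: k a => [|k IH] a ha.
  by case: a ha => [|[|]] // _; rewrite big_nat_recr //= big_nat_recr //= big_geq.
have e2 : 0 < 2 ^ k.+1 by rewrite expn_gt0.
have e3 : 2 ^ k.+2 = 2 * 2 ^ k.+1 by rewrite expnS.
rewrite split_cols s_B0 s_B0'.
rewrite (@eqN _ (fun c => s k.+1 a (c + 2)) (fun c => s k (if a < 2 ^ k.+1 then a else a - 2 ^ k.+1) c)); last by move=> c hc; cbv beta; rewrite s_B1.
rewrite (@eqN _ (fun c => s k.+1 a (c + 2 + (2 ^ k.+2 - 2))) (fun c => if a < 2 ^ k.+1 then s k a c else ~~ s k (a - 2 ^ k.+1) c)); last first.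
  move=> c hc; cbv beta; rewrite s_B2 //; case: ifP => h //; rewrite comp //; lia.
case: ifP => h.
  rewrite IH //=; lia.
have h' : a - 2 ^ k.+1 < 2 ^ k.+1 by lia.
have := sumS0 (2 ^ k.+2 - 2) (fun c => s k (a - 2 ^ k.+1) c).
rewrite IH //=; lia.
Qed.

Lemma pair k x y : x < 2 ^ k.+1 -> y < 2 ^ k.+1 -> x != y ->
  \sum_(0 <= b < 2 ^ k.+2 - 2) (s k x b && s k y b) = 2 ^ k - 1.
Proof.
elim: k x y => [|k IH] x y.
  case: x => [|[|]] //; case: y => [|[|]] // _ _ _;
  by rewrite big_nat_recr //= big_nat_recr //= big_geq.
wlog: x y / x < y.
  move=> W hx hy hxy; case: (ltngtP x y) => h; first exact: W.
    rewrite -(W y x) //; last by rewrite eq_sym.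
    by apply: eq_big_nat => i _; rewrite andbC.
  by rewrite h eqxx in hxy.
move=> hlt hx hy hxy.
have e2 : 0 < 2 ^ k.+1 by rewrite expn_gt0.
have e3 : 2 ^ k.+2 = 2 * 2 ^ k.+1 by rewrite expnS.
have e1 : 2 ^ k.+1 = 2 * 2 ^ k by rewrite expnS.
have e0 : 0 < 2 ^ k by rewrite expn_gt0.
rewrite split_cols !s_B0 !s_B0'.
rewrite (@eqN _ (fun c => s k.+1 x (c + 2) && s k.+1 y (c + 2))
  (fun c => s k (if x < 2 ^ k.+1 then x else x - 2 ^ k.+1) c && s k (if y < 2 ^ k.+1 then y else y - 2 ^ k.+1) c)); last by move=> c hc; cbv beta; rewrite !s_B1.
have hx' : (if x < 2 ^ k.+1 then x else x - 2 ^ k.+1) < 2 ^ k.+1 by case: ifP; lia.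
have hy' : (if y < 2 ^ k.+1 then y else y - 2 ^ k.+1) < 2 ^ k.+1 by case: ifP; lia.
case: (ltnP y (2 ^ k.+1)) => hyb.
-
  have hxb : x < 2 ^ k.+1 by lia.
  rewrite hxb.
  rewrite (@eqN _ (fun c => s k.+1 x (c + 2 + (2 ^ k.+2 - 2)) && s k.+1 y (c + 2 + (2 ^ k.+2 - 2)))
    (fun c => s k x c && s k y c)); last by move=> c hc; cbv beta; rewrite !s_B2 // hxb hyb.
  rewrite IH //=; lia.
case: (ltnP x (2 ^ k.+1)) => hxb.
-
  rewrite (@eqN _ (fun c => s k.+1 x (c + 2 + (2 ^ k.+2 - 2)) && s k.+1 y (c + 2 + (2 ^ k.+2 - 2)))
    (fun c => s k x c && ~~ s k (y - 2 ^ k.+1) c)); last first.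
    move=> c hc; cbv beta; rewrite !s_B2 // hxb; case: ltnP => h; first lia.
    rewrite comp //; lia.
  have hyn : (y < 2 ^ k.+1) = false by lia.
  move: hy'; rewrite hyn => hy'.
  have := sumS2 (2 ^ k.+2 - 2) (fun c => s k x c) (fun c => s k (y - 2 ^ k.+1) c).
  rewrite rw //=.
  case: (eqVneq x (y - 2 ^ k.+1)) => [<-|ne].
    rewrite (@eqN _ (fun c => s k x c && s k x c) (fun c => s k x c)); last by move=> c _; cbv beta; rewrite andbb.
    rewrite rw //; lia.
  rewrite IH //; lia.
-
  rewrite (@eqN _ (fun c => s k.+1 x (c + 2 + (2 ^ k.+2 - 2)) && s k.+1 y (c + 2 + (2 ^ k.+2 - 2)))
    (fun c => ~~ s k (x - 2 ^ k.+1) c && ~~ s k (y - 2 ^ k.+1) c)); last first.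
    move=> c hc; cbv beta; rewrite !s_B2 //; case: ltnP => h; first lia.
    case: ltnP => h'; first lia.
    rewrite !comp //; lia.
  have hyn : (y < 2 ^ k.+1) = false by lia.
  have hxn : (x < 2 ^ k.+1) = false by lia.
  move: hx' hy'; rewrite hyn hxn => hx' hy'.
  have := sumS1 (2 ^ k.+2 - 2) (fun c => s k (x - 2 ^ k.+1) c) (fun c => s k (y - 2 ^ k.+1) c).
  rewrite !rw // IH //; last lia.
  lia.
Qed.

Lemma card_sum n (P : 'I_n -> bool) (f : nat -> bool) :
  (forall i : 'I_n, P i = f i) -> #|[set i | P i]| = \sum_(0 <= i < n) f i.
Proof.
move=> H; rewrite -sum1_card big_mkcond /= big_mkord; apply: eq_bigr => i _.
by rewrite inE H; case: (f i).
Qed.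

Theorem proposition4p4 (r : nat) (hr : (0 < r)%N) :
  incidence_matrix (fun b => [set a | Smat r a b == 1%R]) = Smat r /\
  is_2design (2 ^ r %/ 2) (2 ^ r %/ 2 - 1) (fun b => [set a | Smat r a b == 1%R]).
Proof.
case: r hr => [//|k] _ /=.
have e : 2 ^ k.+1 %/ 2 = 2 ^ k by rewrite expnS mulKn.
split.
  apply/matrixP => a b; rewrite !mxE inE Sm_s.
  by case: (s k a b).
rewrite e; split.
  move=> b; rewrite (@card_sum _ _ (fun a => s k a b)) ?cw //.
  by move=> a; rewrite Sm_s; case: (s k a b).
move=> x y hxy.
rewrite (@card_sum _ _ (fun b => s k x b && s k y b)) ?pair //.
by move=> b; rewrite !inE !Sm_s; case: (s k x b); case: (s k y b).
Qed.
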